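(* For any real numbers $G_2,G_3$ with $G_2\neq0$ and $G_2^3-27G_3^2>0$, the polynomial $K^4-G_2K^2/2-G_3K-G_2^2/48$ has one real negative root, one real positive root, and two non-real complex conjugate roots. *)

(* Defs.v *)
From mathcomp Require Import all_boot all_order all_algebra.
From mathcomp Require Export complex.
Set Implicit Arguments. Unset Strict Implicit. Unset Printing Implicit Defensive.
Import Order.TTheory GRing.Theory Num.Theory.
Local Open Scope ring_scope.

Definition quartic (R : fieldType) (G2 G3 : R) : {poly R} :=
  'X^4 - (G2 / 2%:R) *: 'X^2 - G3 *: 'X - (G2 ^+ 2 / 48%:R)%:P.

(* Main.v *)
Require Import Defs.
From mathcomp Require Import all_boot all_order all_algebra.
From mathcomp Require Import complex.
From mathcomp Require Import ring lra polyrcf.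
Import Order.TTheory GRing.Theory Num.Theory.
Local Open Scope ring_scope.

Lemma bnd (R : realFieldType) (G2 a : R) : 0 < G2 -> 0 <= a ->
  0 < (2 + G2 + a)^+4 - G2/2 * (2 + G2 + a)^+2 - a * (2 + G2 + a) - G2^+2/48.
Proof.
move=> h1 h2; set M := 2 + G2 + a.
have hM : 2 <= M by rewrite /M; lra.
have h3 : G2 <= M by rewrite /M; lra.
have h4 : a <= M by rewrite /M; lra.
have hM0 : 0 < M by lra.
have e6 : 0 < M^+2 by rewrite exprn_gt0.
have e1 : G2 * M ^+ 2 <= M^+3. 
  by rewrite exprS; apply: ler_wpM2r; lra.
have e2 : a * M <= M^+2 by rewrite expr2 ler_wpM2r ?exprn_ge0 //; lra.
have e3 : G2^+2 <= M^+2 by rewrite lerXn2r // ?nnegrE; lra.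
have e4 : 2 * M^+3 <= M^+4 by rewrite (exprS _ 3) ler_wpM2r ?exprn_ge0 //; lra.
have e5 : 2 * M^+2 <= M^+3 by rewrite (exprS _ 2) ler_wpM2r ?exprn_ge0 //; lra.
lra.
Qed.
Definition D {R : comNzRingType} (a b k : R) :=
  256*k^+3 - 128*a^+2*k^+2 + 144*a*b^+2*k - 27*b^+4 + 16*a^+4*k - 4*a^+3*b^+2.

Lemma Did (R : comNzRingType) (s P c : R) :
  D (c + P - s^+2) (P*s - s*c) (P*c) =
  (s^+2 - 4*P) * (s^+2 - 4*c) * ((P-c)^+2 + 2*s^+2*(P+c))^+2.
Proof. rewrite /D; ring. Qed.

Lemma DG (R : realFieldType) (G2 G3 : R) :
  D (-(G2/2)) (-G3) (-(G2^+2/48)) = - (G2^+3 - 27 * G3^+2)^+2 / 27.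
Proof. by rewrite /D; field. Qed.

Theorem lemma23 (R : rcfType) (G2 G3 : R) :
  G2 != 0 -> 0 < G2 ^+ 3 - 27%:R * G3 ^+ 2 ->
  exists (r1 r2 : R) (z : R[i]),
    [/\ r1 < 0, 0 < r2, complex.Im z != 0 &
      map_poly (real_complex R) (quartic G2 G3) =
        ('X - (r1%:C)%C%:P) * ('X - (r2%:C)%C%:P) * ('X - z%:P) * ('X - (conjc z)%:P)].
Proof.
move=> hG2 hD.
have G2pos : 0 < G2.
  have e : G2^+3 = G2 * (G2 * G2) by ring.
  have h27 : 0 <= 27%:R * G3 ^+ 2 by rewrite mulr_ge0 ?sqr_ge0.
  have hsq : 0 < G2 * G2 by rewrite -expr2 exprn_gt0 // ?lt_def ?hG2 ?sqr_ge0 //; rewrite -normr_gt0 in hG2; nra.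
  nra.
set p := quartic G2 G3.
have pE : forall x, p.[x] = x^+4 - G2/2 * x^+2 - G3 * x - G2^+2/48.
  by move=> x; rewrite /p /quartic !hornerE /=; ring.
set M := 2 + G2 + `|G3|.
have hM : 0 < M by rewrite /M; have := normr_ge0 G3; lra.
have hb := @bnd _ G2 `|G3| G2pos (normr_ge0 G3).
have hG3M : G3 * M <= `|G3| * M by apply: ler_wpM2r; [exact: ltW | exact: ler_norm].
have hG3M' : - G3 * M <= `|G3| * M by apply: ler_wpM2r; [exact: ltW | rewrite -normrN; exact: ler_norm].
have pM : 0 < p.[M] by rewrite pE; rewrite -/M in hb; lra.
have pmM : 0 < p.[-M].
  rewrite pE; rewrite -/M in hb.
  have -> : (-M)^+4 = M^+4 by rewrite (exprS _ 3) (exprS _ 2) !exprS expr0; ring.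
  have -> : (-M)^+2 = M^+2 by rewrite sqrrN.
  have -> : G3 * - M = - G3 * M by ring.
  lra.
have p0 : p.[0] < 0.
  rewrite pE; have : 0 < G2^+2 by rewrite exprn_gt0.
  have -> : (0:R)^+4 - G2/2 * 0^+2 - G3 * 0 - G2^+2/48 = -(G2^+2/48) by ring.
  lra.
have [r1 hr1 rr1] : {x | x \in `]-M, 0[ & root p x}.
  by apply: poly_ivtoo; [rewrite oppr_le0 ltW | rewrite pmulr_rlt0].
have [r2 hr2 rr2] : {x | x \in `]0, M[ & root p x}.
  by apply: poly_ivtoo; [rewrite ltW | rewrite nmulr_rlt0].
have r1n : r1 < 0 by move: hr1; rewrite in_itv /= => /andP[].
have r2p : 0 < r2 by move: hr2; rewrite in_itv /= => /andP[].
move: rr1 rr2; rewrite /root !pE => /eqP pr1 /eqP pr2.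
set s := r1 + r2; set P := r1 * r2.
have [c hc] : exists c, c = s^+2 - P - G2/2 by eexists.
have eid : forall x, x^+4 - G2/2 * x^+2 - G3 * x - G2^+2/48 =
   (x^+2 - s*x + P) * (x^+2 + s*x + c) + (-G3 + s*c - P*s) * x + (-(G2^+2/48) - P*c).
  by move=> x; rewrite hc /s /P; ring.
have e1 : (-G3 + s*c - P*s) * r1 + (-(G2^+2/48) - P*c) = 0.
  by rewrite -pr1 eid /s /P; ring.
have e2 : (-G3 + s*c - P*s) * r2 + (-(G2^+2/48) - P*c) = 0.
  by rewrite -pr2 eid /s /P; ring.
have alpha0 : -G3 + s*c - P*s = 0.
  have : (-G3 + s*c - P*s) * (r1 - r2) = 0 by rewrite mulrBr; lra.
  move/eqP; rewrite mulf_eq0 => /orP[/eqP //|]; rewrite subr_eq0 => /eqP h.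
  by move: r1n r2p; rewrite h; lra.
have beta0 : -(G2^+2/48) - P*c = 0 by move: e1; rewrite alpha0 mul0r add0r.
have Pneg : P < 0 by rewrite /P nmulr_rlt0.
have disc : s^+2 < 4 * c.
  have h := @Did _ s P c.
  have ea : c + P - s^+2 = -(G2/2) by rewrite hc; ring.
  have eb : P * s - s * c = - G3 by lra.
  have ek : P * c = -(G2^+2/48) by lra.
  rewrite ea eb ek DG in h.
  have hneg : - (G2 ^+ 3 - 27 * G3 ^+ 2) ^+ 2 / 27 < 0.
    have : 0 < (G2 ^+ 3 - 27 * G3 ^+ 2) ^+ 2 by rewrite exprn_gt0.
    lra.
  rewrite h in hneg.
  rewrite ltNge; apply/negP => hc4.
  have : 0 <= (s ^+ 2 - 4 * P) * (s ^+ 2 - 4 * c) * ((P - c) ^+ 2 + 2 * s ^+ 2 * (P + c)) ^+ 2.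
    rewrite mulr_ge0 ?sqr_ge0 // mulr_ge0 //.
      have : 0 <= s^+2 by rewrite sqr_ge0. lra.
    lra.
  lra.
have hpoly : p = ('X - r1%:P) * ('X - r2%:P) * ('X^2 + s%:P * 'X + c%:P).
  have h1 : G2 / 2%:R = s^+2 - P - c by rewrite hc; ring.
  have h2 : G3 = s * c - P * s by lra.
  have h3 : G2 ^+ 2 / 48%:R = - (P * c) by lra.
  rewrite /p /quartic -!mul_polyC h1 h2 h3 /s /P.
  rewrite !(rmorphB, rmorphD, rmorphM, rmorphN) /=.
  ring.
set d := c - s^+2/4.
have dpos : 0 < d by rewrite /d; lra.
set b := Num.sqrt d.
have bpos : 0 < b by rewrite /b sqrtr_gt0.
have bb : b ^+ 2 = d by rewrite /b sqr_sqrtr // ltW.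
exists r1, r2, ((-(s/2)) +i* b)%C; split => //.
  by rewrite /= gt_eqF.
rewrite hpoly !(rmorphM, rmorphB, rmorphD) /= !map_polyX !map_polyC /=.
have ez : ((- (s / 2)) +i* b)%C + ((- (s / 2)) -i* b)%C = (-(r1+r2))%:C%C.
  change ((((- (s / 2)) + (- (s/2))) +i* (b + - b))%C = ((-(r1+r2)) +i* 0)%C).
  by congr (Complex _ _); rewrite /s; field.
have ezz : ((- (s / 2)) +i* b)%C * ((- (s / 2)) -i* b)%C = c%:C%C.
  change ((((- (s / 2)) * (- (s/2)) - b * (- b)) +i* ((- (s / 2)) * (- b) + b * (- (s/2))))%C = (c +i* 0)%C).
  congr (Complex _ _); last by ring.
  have -> : b * (- b) = - d by rewrite mulrN -expr2 bb.
  by rewrite /d; field.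
have key : ('X - ((- (s / 2)) +i* b)%C%:P) * ('X - ((- (s / 2)) -i* b)%C%:P) =
  'X * 'X + ((r1%:C%C)%:P + (r2%:C%C)%:P) * 'X + (c%:C%C)%:P.
  have -> : ('X - ((- (s / 2)) +i* b)%C%:P) * ('X - ((- (s / 2)) -i* b)%C%:P) =
    'X * 'X - (((- (s / 2)) +i* b)%C + ((- (s / 2)) -i* b)%C)%:P * 'X
     + (((- (s / 2)) +i* b)%C * ((- (s / 2)) -i* b)%C)%:P.
    rewrite polyCD polyCM; ring.
  rewrite ez ezz rmorphN rmorphD polyCN polyCD; ring.
rewrite -key; ring.
Qed.
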